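(* Any time-optimal trajectory of the problem below (with $T>0$) ends with an $X$-arc; that is, the control $A$ equals $X$ on some interval $(T-\delta,T]$, $\delta>0$.
   Context: Fix $\gamma\in(0,\pi/2)$, $s=\sin\gamma$, $c=\cos\gamma$, and $X=\begin{pmatrix}0&s^2&sc\\-s^2&0&0\\-sc&0&0\end{pmatrix}$, $Y=\begin{pmatrix}0&1&0\\-1&0&0\\0&0&0\end{pmatrix}$ on $\mathbb R^3$ with standard basis $e_1,e_2,e_3$. Let $\Sigma=\{\psi:\langle e_3,\psi\rangle=0\}$, $\psi_0=(0,s,c)^\top$. Time-optimal problem: over piecewise constant controls $A:[0,T]\to\{X,Y\}$ with finitely many discontinuities and trajectories $\dot\psi=A(t)\psi$, $\psi(0)=\psi_0$, minimize $T$ subject to $\psi(T)\in\Sigma$. Maximal intervals on which $A\equiv X$ are called $X$-arcs. *)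

(* Defs.v *)
From HB Require Import structures.
From mathcomp Require Import all_boot all_order all_algebra.
From mathcomp Require Import all_classical all_reals all_analysis.
Set Implicit Arguments. Unset Strict Implicit. Unset Printing Implicit Defensive.
Import Order.TTheory GRing.Theory Num.Theory.
Import numFieldNormedType.Exports.
Local Open Scope ring_scope.
Local Open Scope classical_set_scope.
Local Open Scope ring_scope.

Section Defs.
Variable R : realType.

Definition mx3 (rows : seq (seq R)) : 'M[R]_3 :=
  \matrix_(i < 3, j < 3) nth 0 (nth [::] rows i) j.

Definition cv3 (a b c : R) : 'cV[R]_3 := \col_(i < 3) nth 0 [:: a; b; c] i.

Definition Xmx (gamma : R) : 'M[R]_3 :=
  let s := sin gamma in let c := cos gamma in
  mx3 [:: [:: 0; s ^+ 2; s * c]; [:: - s ^+ 2; 0; 0]; [:: - (s * c); 0; 0]].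

Definition Ymx : 'M[R]_3 :=
  mx3 [:: [:: 0; 1; 0]; [:: -1; 0; 0]; [:: 0; 0; 0]].

Definition psi0 (gamma : R) : 'cV[R]_3 := cv3 0 (sin gamma) (cos gamma).

Inductive ctrl := CX | CY.

Definition ctrlmx (gamma : R) (a : ctrl) : 'M[R]_3 :=
  match a with CX => Xmx gamma | CY => Ymx end.

Definition inSigma (v : 'cV[R]_3) : Prop := v ord_max 0 = 0.

Definition admissible (gamma T : R) (A : R -> ctrl) (psi : R -> 'cV[R]_3) : Prop :=
  0 <= T /\
  (exists (n : nat) (tt : nat -> R),
      tt 0%N = 0 /\ tt n = T /\
      (forall i, (i < n)%N -> tt i < tt i.+1) /\
      (forall i, (i < n)%N -> exists a, forall t, tt i < t < tt i.+1 -> A t = a) /\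
      (forall t, 0 < t < T -> (forall i, (i <= n)%N -> t != tt i) ->
         is_derive t 1 psi (ctrlmx gamma (A t) *m psi t))) /\
  {within `[0, T]%classic, continuous psi} /\
  psi 0 = psi0 gamma.

Definition time_optimal (gamma T : R) (A : R -> ctrl) (psi : R -> 'cV[R]_3) : Prop :=
  admissible gamma T A psi /\ inSigma (psi T) /\
  forall T' A' psi', admissible gamma T' A' psi' -> inSigma (psi' T') -> T <= T'.

End Defs.

(* Main.v *)
Require Import Defs.
From HB Require Import structures.
From mathcomp Require Import all_boot all_order all_algebra.
From mathcomp Require Import all_classical all_reals all_analysis.
From mathcomp Require Import lra.
Import Order.TTheory GRing.Theory Num.Theory.
Import numFieldNormedType.Exports.
Local Open Scope classical_set_scope.
Local Open Scope ring_scope.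

Lemma Ymx_last (R : realType) (v : 'cV[R]_3) : (Ymx R *m v) ord_max 0 = 0.
Proof.
rewrite !mxE; apply: big1 => k _.
rewrite /Ymx /mx3 mxE /=.
case: k => [[|[|[|k]]] Hk] /=.
all: by rewrite ?nth_nil; apply: mul0r.
Qed.

Lemma tt_mono (R : realType) (tt : nat -> R) (n : nat) :
  (forall i, (i < n)%N -> tt i < tt i.+1) ->
  forall i j, (i <= j)%N -> (j <= n)%N -> tt i <= tt j.
Proof.
move=> inc i j; elim: j => [|j IH] hij hj.
  by move: hij; rewrite leqn0 => /eqP ->.
move: hij; rewrite leq_eqVlt => /orP [/eqP -> //| hij].
apply: le_trans (IH hij (ltnW hj)) _.
exact: ltW (inc j hj).
Qed.

Lemma within_comp {T U V : topologicalType} (A : set T) (f : T -> U) (h : U -> V) :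
  continuous h -> {within A, continuous f} -> {within A, continuous (h \o f)}.
Proof. move=> hc fc x. apply: (@continuous_comp (subspace A) U V f h x (fc x) (hc (f x))). Qed.

Theorem lemmaA1 (R : realType) (gamma : R) (T : R) (A : R -> ctrl)
  (psi : R -> 'cV[R]_3) :
  0 < gamma < pi / 2 ->
  time_optimal gamma T A psi ->
  0 < T ->
  exists2 delta : R, 0 < delta & forall t, T - delta < t < T -> A t = CX.
Proof.
move=> _ [[T0 [[n [tt [tt0 [ttn [ttinc [ttpc ttder]]]]]] [cont psi0E]]] [sigT opt]] Tpos.
case: n ttn ttinc ttpc ttder => [|m] ttn ttinc ttpc ttder.
  by move: Tpos; rewrite -ttn tt0 ltxx.
have mono := @tt_mono R tt m.+1 ttinc.
have ltm : tt m < T by rewrite -ttn; exact: ttinc.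
have ge0 : 0 <= tt m by rewrite -tt0; apply: mono.
have [a Ha] := ttpc m (ltnSn m).
case: a Ha => Ha.
  exists (T - tt m); first by rewrite subr_gt0.
  move=> t /andP[h1 h2]; apply: Ha; apply/andP; split; last by rewrite ttn.
  by move: h1; have -> : T - (T - tt m) = tt m by lra.
exfalso.
set g := fun t => psi t ord_max 0.
have gder : forall x, x \in `]tt m, T[ -> is_derive x 1 g ((fun=> 0 : R) x).
  move=> x; rewrite in_itv /= => /andP[h1 h2].
  have hd := ttder x _ _.
  have hA : A x = CY by apply: Ha; rewrite h1 /= ttn.
  have H : is_derive x 1 psi (ctrlmx gamma (A x) *m psi x).
    apply: hd.
      by apply/andP; split => //; apply: le_lt_trans ge0 h1.
    move=> i hi; case: (ltngtP i m.+1) => hh.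
    - apply/eqP => ex; have := mono i m hh (leqnSn m); rewrite -ex.
      by rewrite leNgt h1.
    - by move: hi; rewrite leqNgt hh.
    - by rewrite hh ttn; apply/eqP => ex; move: h2; rewrite ex ltxx.
  rewrite hA /= in H.
  case: H => Hd HD.
  apply: DeriveDef.
    by move/derivable_mxP: Hd; apply.
  have := derive_mx Hd.
  rewrite HD => /(congr1 (fun M : 'M[R]_(3,1) => M ord_max 0)).
  by rewrite Ymx_last mxE /g => <-.
have gcont : {within `[tt m, T]%classic, continuous g}.
  have c2 : {within `[tt m, T]%classic, continuous psi}.
    apply: continuous_subspaceW cont.
    by apply: subset_itv; rewrite bnd_simp.
  have hc : continuous (fun N : 'cV[R]_3 => N ord_max 0).
    by move=> N; exact: differentiable_continuous (differentiable_coord _ _ _).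
  exact: (@within_comp _ _ _ _ psi _ hc c2).
have [c _ hc] := MVT ltm gder gcont.
have gm : g (tt m) = 0.
  by move: hc; rewrite mul0r; move: sigT; rewrite /inSigma /g => -> ; lra.
have : T <= tt m.
  apply: (opt (tt m) A psi); last exact: gm.
  split => //; split; last first.
    split => //; apply: continuous_subspaceW cont.
    by apply: subset_itv; rewrite bnd_simp // ltW.
  exists m, tt; split => //; split => //; split.
    by move=> i hi; apply: ttinc; apply: leqW.
  split; first by move=> i hi; apply: ttpc; apply: leqW.
  move=> t /andP[t0 tm] hne; apply: ttder.
    by rewrite t0 /=; apply: lt_trans ltm.
  move=> i hi; case: (ltngtP i m.+1) => hh.
  - by apply: hne.
  - by move: hi; rewrite leqNgt hh.
  - by rewrite hh ttn; apply/eqP => ex; move: tm ltm; rewrite ex => h1 h2; have := lt_trans h1 h2; rewrite ltxx.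
by rewrite leNgt ltm.
Qed.
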